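(* Let $G$ be a finite connected simple graph not isomorphic to $C_3$, $C_4$ or $C_5$. Then at least one of $G$, $\mathrm{L}(G)$, $\mathrm{L}^{(2)}(G)$ is not strongly regular; more precisely, there is $m\in\{0,1,2\}$ such that $\mathrm{L}^{(m)}(G)$ is not strongly regular.
   Context: A finite simple graph on $v\ge1$ vertices is strongly regular with parameters $(v,k,\lambda,\mu)$, where $k,\lambda,\mu$ are nonnegative integers, if every vertex has degree $k$, every pair of adjacent vertices has exactly $\lambda$ common neighbours, and every pair of distinct non-adjacent vertices has exactly $\mu$ common neighbours; by convention the graph with no vertices is not strongly regular. $\mathrm{L}(G)$ has vertex set $E(G)$, two vertices adjacent iff the corresponding edges share an endpoint; $\mathrm{L}^{(0)}(G)=G$, $\mathrm{L}^{(m)}(G)=\mathrm{L}(\mathrm{L}^{(m-1)}(G))$. $C_n$ is the cycle on $n$ vertices. *)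

(* Defs.v *)
From mathcomp Require Import all_boot.
Set Implicit Arguments. Unset Strict Implicit. Unset Printing Implicit Defensive.

Record sgraph := SGraph {
  vert : finType;
  adj : rel vert;
  adj_sym : symmetric adj;
  adj_irr : irreflexive adj }.

Definition connected (G : sgraph) : Prop :=
  forall x y : vert G, connect (@adj G) x y.

Definition common_nbrs (G : sgraph) (x y : vert G) : {set vert G} :=
  [set z | adj x z && adj y z].

Definition srg_with (G : sgraph) (v k l m : nat) : Prop :=
  [/\ #|vert G| = v, 1 <= v,
      forall x : vert G, #|[set y | adj x y]| = k,
      forall x y : vert G, adj x y -> #|common_nbrs x y| = l &
      forall x y : vert G, x != y -> ~~ adj x y -> #|common_nbrs x y| = m].

Definition strongly_regular (G : sgraph) : Prop :=
  exists v k l m, srg_with G v k l m.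

Definition is_edge (G : sgraph) (s : {set vert G}) : bool :=
  [exists x : vert G, exists y : vert G, adj x y && (s == [set x; y])].

Definition edge_type (G : sgraph) := {s : {set vert G} | is_edge s}.

Definition line_adj (G : sgraph) : rel (edge_type G) :=
  fun e f => (e != f) && (val e :&: val f != set0).

Lemma line_adj_sym G : symmetric (@line_adj G).
Proof. by move=> e f; rewrite /line_adj eq_sym setIC. Qed.

Lemma line_adj_irr G : irreflexive (@line_adj G).
Proof. by move=> e; rewrite /line_adj eqxx. Qed.

Definition line_graph (G : sgraph) : sgraph :=
  SGraph (@line_adj_sym G) (@line_adj_irr G).

Fixpoint iter_line (m : nat) (G : sgraph) : sgraph :=
  match m with 0 => G | m'.+1 => line_graph (iter_line m' G) end.

(* The cycle C_n on 'I_n (meaningful for n >= 3). *)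
Definition cyc_adj (n : nat) : rel 'I_n :=
  fun i j => (i != j) && ((j == (i.+1 %% n) :> nat) || (i == (j.+1 %% n) :> nat)).

Lemma cyc_adj_sym n : symmetric (@cyc_adj n).
Proof. by move=> i j; rewrite /cyc_adj eq_sym orbC. Qed.

Lemma cyc_adj_irr n : irreflexive (@cyc_adj n).
Proof. by move=> i; rewrite /cyc_adj eqxx. Qed.

Definition cycle_graph (n : nat) : sgraph :=
  SGraph (@cyc_adj_sym n) (@cyc_adj_irr n).

Definition isomorphic (G H : sgraph) : Prop :=
  exists f : vert G -> vert H, bijective f /\
    forall x y : vert G, adj (f x) (f y) = adj x y.

(* Main.v *)
Require Import Defs.
From mathcomp Require Import all_boot zify.
Set Implicit Arguments. Unset Strict Implicit. Unset Printing Implicit Defensive.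

Section L.
Variable H : sgraph.
Implicit Types x y z w : vert H.

Lemma adj_neq x y : adj x y -> x != y.
Proof. by apply: contraTneq => ->; rewrite adj_irr. Qed.

Lemma is_edge2 x y (h : adj x y) : is_edge [set x; y].
Proof. by apply/existsP; exists x; apply/existsP; exists y; rewrite h eqxx. Qed.

Definition mkE x y (h : adj x y) : edge_type H := exist _ [set x; y] (is_edge2 h).

Lemma set2_eq2 p q y z : y != z -> y \in [set p; q] -> z \in [set p; q] ->
  (y = p /\ z = q) \/ (y = q /\ z = p).
Proof.
move=> yz hy hz; move: hy hz yz => /set2P[]-> /set2P[]-> yz;
  [by rewrite eqxx in yz | by left | by right | by rewrite eqxx in yz].
Qed.

Lemma edge_adj2 y z : y != z -> is_edge [set y; z] -> adj y z.
Proof.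
move=> yz /existsP[p /existsP[q /andP[hpq /eqP E]]].
have hy : y \in [set p; q] by rewrite -E set21.
have hz : z \in [set p; q] by rewrite -E set22.
have [[-> ->]|[-> ->]] := set2_eq2 yz hy hz => //.
by rewrite adj_sym.
Qed.

Lemma edge_at (F : edge_type H) w : w \in val F ->
  exists u, adj w u /\ val F = [set w; u].
Proof.
case: F => /= s /existsP[p /existsP[q /andP[hpq /eqP ->]]] /set2P[]->.
  by exists q.
by exists p; rewrite adj_sym setUC.
Qed.

Lemma set2_sub p q y z : y != z -> y \in [set p; q] -> z \in [set p; q] ->
  [set p; q] = [set y; z].
Proof.
move=> yz hy hz; have [[-> ->]|[-> ->]] := set2_eq2 yz hy hz => //.
by rewrite setUC.
Qed.

Lemma val_set2 (F : edge_type H) y z : y != z -> y \in val F -> z \in val F ->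
  val F = [set y; z].
Proof.
move=> yz hy hz; have [u [_ E]] := edge_at hy.
by rewrite E in hz *; apply: set2_sub; rewrite // set21.
Qed.

Lemma line_adjI (E F : edge_type H) w : w \in val E -> w \in val F -> E != F ->
  line_adj E F.
Proof.
move=> hE hF EF; rewrite /line_adj EF /=; apply/set0Pn; exists w; by rewrite inE hE hF.
Qed.

Lemma mkE_adj x y z (hy : adj x y) (hz : adj x z) : y != z ->
  line_adj (mkE hy) (mkE hz).
Proof.
move=> yz; apply: (@line_adjI _ _ x); rewrite /= ?set21 //.
apply/eqP => /(congr1 val) /= /setP /(_ y); rewrite set22 => /esym /set2P[].
  by move=> yx; move: (adj_neq hy); rewrite yx eqxx.
by move/eqP; rewrite (negbTE yz).
Qed.

Lemma other_end x y (hy : adj x y) (F : edge_type H) :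
  line_adj (mkE hy) F -> x \notin val F -> y \in val F.
Proof.
case/andP=> _ /set0Pn[w]; rewrite inE => /andP[/set2P[]-> // wF].
by rewrite wF.
Qed.

Lemma common_out x y z (hy : adj x y) (hz : adj x z) (F : edge_type H) :
  y != z -> line_adj (mkE hy) F -> line_adj (mkE hz) F -> x \notin val F ->
  val F = [set y; z].
Proof.
move=> yz h1 h2 xF; apply: val_set2 => //.
  exact: other_end h1 xF.
exact: other_end h2 xF.
Qed.

Lemma count_common x y z (hy : adj x y) (hz : adj x z) : y != z ->
  #|@common_nbrs (line_graph H) (mkE hy) (mkE hz)| + 2 =
  #|[set F : edge_type H | x \in val F]| + adj y z.
Proof.
move=> yz.
set C := common_nbrs _ _; set X := [set F : edge_type H | x \in val F].
have xy := adj_neq hy; have xz := adj_neq hz.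
have E12 : mkE hy != mkE hz by case/andP: (mkE_adj hy hz yz).
rewrite -(cardsID X C).
have -> : C :&: X = (X :\ mkE hy) :\ mkE hz.
  apply/setP => F; rewrite !inE.
  case xF: (x \in val F); rewrite ?andbF ?andbT //.
  rewrite /= /line_adj.
  have -> : (val (mkE hy) :&: val F != set0).
    by apply/set0Pn; exists x; rewrite inE xF set21.
  have -> : (val (mkE hz) :&: val F != set0).
    by apply/set0Pn; exists x; rewrite inE xF set21.
  by rewrite !andbT andbC ![F == _]eq_sym.
have hX : #|X| = (#|X :\ mkE hy :\ mkE hz|).+2.
  rewrite (cardsD1 (mkE hy)) (cardsD1 (mkE hz) (X :\ _)) !inE /=.
  by rewrite eqxx (eq_sym (mkE hz)) E12.
have hCX : #|C :\: X| = adj y z.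
  case hyz: (adj y z).
    suff -> : C :\: X = [set mkE hyz] by rewrite cards1.
    apply/setP => F; rewrite !inE /=.
    apply/idP/idP.
      case/andP=> xF /andP[h1 h2]; apply/eqP/val_inj => /=.
      exact: common_out h1 h2 xF.
    move/eqP => ->; rewrite /=.
    have xn : x \notin [set y; z] by apply/set2P => -[] /eqP; rewrite ?(negbTE xy) ?(negbTE xz).
    rewrite xn /=.
    have neq (w : vert H) (hw : adj x w) : mkE hw != mkE hyz.
      apply/eqP => /(congr1 val) /= /setP /(_ x); rewrite set21 => /esym.
      by rewrite (negbTE xn).
    apply/andP; split.
      by apply: (@line_adjI _ _ y); rewrite /= ?set21 ?set22 ?neq.
    by apply: (@line_adjI _ _ z); rewrite /= ?set21 ?set22 ?neq.
  suff -> : C :\: X = set0 by rewrite cards0.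
  apply/setP => F; rewrite !inE.
  apply/negP => /andP[xF /andP[h1 h2]].
  have E := common_out yz h1 h2 xF.
  have := valP F; rewrite E => /(edge_adj2 yz); by rewrite hyz.
rewrite hX hCX; lia.
Qed.


Lemma no_edge_line : (forall x y : vert H, ~~ adj x y) -> ~ strongly_regular (line_graph H).
Proof.
move=> noe [v [k [l [m [Hv Hv1 _ _ _]]]]].
have : 0 < #|vert (line_graph H)| by rewrite Hv.
case/card_gt0P => F _.
have := valP F => /existsP[p /existsP[q /andP[hpq _]]].
by have := noe p q; rewrite hpq.
Qed.

Lemma deg1_line : (forall x : vert H, #|[set y | adj x y]| = 1) ->
  forall E F : edge_type H, ~~ line_adj E F.
Proof.
move=> d1 E F; apply/negP => /andP[EF /set0Pn[w]]; rewrite inE => /andP[wE wF].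
have [u [hu Eu]] := edge_at wE; have [u' [hu' Fu']] := edge_at wF.
have /cards1P[t Ht] : #|[set y | adj w y]| == 1 by rewrite d1.
have : u \in [set y | adj w y] by rewrite inE.
have : u' \in [set y | adj w y] by rewrite inE.
rewrite Ht !inE => /eqP e1 /eqP e2.
move: EF; have -> : E = F by apply: val_inj; rewrite Eu Fu' e1 e2.
by rewrite eqxx.
Qed.
End L.

Lemma deg3_line (G : sgraph) k (x0 : vert G) :
  (forall x : vert G, #|[set y | adj x y]| = k) -> 3 <= k ->
  ~ strongly_regular (line_graph (line_graph G)).
Proof.
move=> dk k3 [n [k' [l [m [_ _ _ Hl _]]]]].
have nb (x : vert G) (A : {set vert G}) : #|A| < k -> exists y, adj x y && (y \notin A).
  move=> hA; have : 0 < #|[set y | adj x y] :\: A|.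
    have := cardsID A [set y | adj x y]; rewrite dk; move: hA.
    have : #|[set y | adj x y] :&: A| <= #|A| by apply: subset_leq_card; apply: subsetIr.
    lia.
  by case/card_gt0P => y; rewrite !inE => /andP[h1 h2]; exists y; rewrite h1 h2.
have [x /andP[hvx _]] : exists y, adj x0 y && (y \notin set0) by apply: nb; rewrite cards0; lia.
have [w1 /andP[hw1]] : exists y, adj x0 y && (y \notin [set x]) by apply: nb; rewrite cards1; lia.
rewrite !inE => w1x.
have [w2 /andP[hw2]] : exists y, adj x0 y && (y \notin [set x; w1]).
  by apply: nb; rewrite cards2; case: (_ != _) => /=; lia.
rewrite !inE negb_or => /andP[w2x w2w1].
have [y /andP[hxy]] : exists y, adj x y && (y \notin [set x0]) by apply: nb; rewrite cards1; lia.
rewrite !inE => yx0.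
have [w [hw wx wy]] : exists w, [/\ adj x0 w, w != x & w != y].
  case: (eqVneq w1 y) => [e1|n1]; last by exists w1.
  by exists w2; rewrite -e1.
have x0x := adj_neq hvx; have xy := adj_neq hxy; have x0w := adj_neq hw.
set H := line_graph G.
have he1 : line_adj (mkE hvx) (mkE hw1) by apply: mkE_adj; rewrite eq_sym.
have he2 : line_adj (mkE hvx) (mkE hw2) by apply: mkE_adj; rewrite eq_sym.
have f1g1 : @line_adj G (mkE hw1) (mkE hw2) by apply: mkE_adj; rewrite eq_sym.
have f1g1n : mkE hw1 != mkE hw2 by case/andP: f1g1.
have he3 : line_adj (mkE hvx) (mkE hxy).
  apply: (@line_adjI _ _ _ x); rewrite /= ?set21 ?set22 //.
  apply/eqP => /(congr1 val) /= /setP /(_ x0); rewrite set21 => /esym /set2P[] /eqP.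
    by rewrite (negbTE x0x).
  by rewrite eq_sym (negbTE yx0).
have he4 : line_adj (mkE hvx) (mkE hw) by apply: mkE_adj; rewrite eq_sym.
have f2g2 : ~~ @line_adj G (mkE hxy) (mkE hw).
  rewrite /line_adj negb_and !negbK; apply/orP; right.
  apply/eqP/setP => t; rewrite !inE.
  apply/negP => /andP[/orP[] /eqP -> /orP[] /eqP e].
  - by move: x0x; rewrite e eqxx.
  - by move: wx; rewrite e eqxx.
  - by move: yx0; rewrite e eqxx.
  - by move: wy; rewrite e eqxx.
have f2g2n : mkE hxy != mkE hw.
  apply/eqP => /(congr1 val) /= /setP /(_ x); rewrite set21 => /esym /set2P[] /eqP.
    by move=> /eqP e; subst; rewrite eqxx in x0x.
  by move=> /eqP e; subst; rewrite eqxx in wx.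
have c1 := @count_common (line_graph G) _ _ _ he1 he2 f1g1n.
have c2 := @count_common (line_graph G) _ _ _ he3 he4 f2g2n.
rewrite (Hl _ _ (@mkE_adj (line_graph G) _ _ _ he1 he2 f1g1n)) in c1.
rewrite (Hl _ _ (@mkE_adj (line_graph G) _ _ _ he3 he4 f2g2n)) in c2.
have e1 : @adj (line_graph G) (mkE hw1) (mkE hw2) = true := f1g1.
have e2 : @adj (line_graph G) (mkE hxy) (mkE hw) = false := negbTE f2g2.
rewrite e1 in c1; rewrite e2 in c2.
move: c1 c2; set X := #|_|; move=> c1 c2.
have : X < X + true by rewrite addn1.
by rewrite -c1 c2 addn0 ltnn.
Qed.

Lemma neqF (T : eqType) (x y : T) : x != y -> ((x == y) = false) * ((y == x) = false).
Proof. by move=> h; rewrite (negbTE h) eq_sym (negbTE h). Qed.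

Lemma iso_seq (G : sgraph) (s : seq (vert G)) (v : vert G) :
  uniq s -> (forall w, w \in s) ->
  (forall i j : 'I_(size s), adj (nth v s i) (nth v s j) = cyc_adj i j) ->
  isomorphic G (cycle_graph (size s)).
Proof.
move=> us alls hadj.
pose g := fun i : 'I_(size s) => nth v s i.
have ginj : injective g.
  by move=> i j /eqP; rewrite /g nth_uniq // => /eqP /val_inj.
have : bijective g.
  apply: inj_card_bij => //; rewrite card_ord.
  apply: leq_trans (card_size s); apply: subset_leq_card; apply/subsetP => w _; exact: alls.
case=> h gK hK; exists h; split; first by exists g.
move=> x y; rewrite /= -hadj.
by rewrite -/(g (h x)) -/(g (h y)) !hK.
Qed.

Lemma nbr2 (G : sgraph) (x p q : vert G) : #|[set y | adj x y]| = 2 ->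
  adj x p -> adj x q -> p != q -> forall w, adj x w = (w == p) || (w == q).
Proof.
move=> /eqP/cards2P[a [b [ab E]]] hp hq pq w.
have : w \in [set y | adj x y] = (w \in [set a; b]) by rewrite E.
rewrite !inE => ->.
have : p \in [set y | adj x y] by rewrite inE.
have : q \in [set y | adj x y] by rewrite inE.
rewrite E !inE => /orP[] /eqP qe /orP[] /eqP pe; subst;
  rewrite ?eqxx in pq => //; by rewrite orbC.
Qed.

Lemma test (G : sgraph) (v a b : vert G) (ab : a != b) (va : v != a) (vb : v != b) :
  (forall w, adj v w = (w == a) || (w == b)) ->
  (forall w, adj a w = (w == v) || (w == b)) ->
  (forall w, adj b w = (w == v) || (w == a)) ->
  (forall i j : 'I_3, adj (nth v [:: v; a; b] i) (nth v [:: v; a; b] j) = cyc_adj i j).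
Proof.
move=> adjv adja adjb.
case=> [[|[|[|i]]] Hi] // [[|[|[|j]]] Hj] //=;
  rewrite ?adjv ?adja ?adjb ?eqxx ?(neqF ab) ?(neqF va) ?(neqF vb) //.
Qed.

Lemma deg2_case (G : sgraph) n l m : connected G -> srg_with G n 2 l m ->
  ~ isomorphic G (cycle_graph 3) ->
  ~ isomorphic G (cycle_graph 4) ->
  ~ isomorphic G (cycle_graph 5) -> False.
Proof.
move=> conn [Hn Hn1 Hk Hl Hmu] n3 n4 n5.
have /card_gt0P[v _] : 0 < #|vert G| by rewrite Hn.
have /card_gt0P[a] : 0 < #|[set y | adj v y]| by rewrite Hk.
rewrite inE => hva.
have /card_gt0P[b] : 0 < #|[set y | adj v y] :\ a|.
  by have := cardsD1 a [set y | adj v y]; rewrite Hk inE hva; lia.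
rewrite !inE => /andP[ba hvb].
have ab : a != b by rewrite eq_sym.
have adjv := nbr2 (Hk v) hva hvb ab.
have va := adj_neq hva; have vb := adj_neq hvb.
have hav : adj a v by rewrite adj_sym.
have hbv : adj b v by rewrite adj_sym.
have av : a != v by rewrite eq_sym.
have bv : b != v by rewrite eq_sym.
have hmu1 : forall c, adj a c -> c != v -> c != b -> 0 < m.
  move=> c hac cv cb.
  have vc : v != c by rewrite eq_sym.
  have nvc : ~~ adj v c by rewrite adjv (negbTE cb) orbF; apply/eqP => e; subst; rewrite adj_irr in hac.
  rewrite -(Hmu v c vc nvc); apply/card_gt0P; exists a; rewrite inE hva adj_sym hac.
  done.
case hab: (adj a b).
  have hba : adj b a by rewrite adj_sym.
  have adja := nbr2 (Hk a) hav hab vb.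
  have adjb := nbr2 (Hk b) hbv hba va.
  have allw : forall w, w \in [:: v; a; b].
    move=> w; have := conn v w.
    have cl : closed (@adj G) [:: v; a; b].
      suff sub : forall x y, adj x y -> x \in [:: v; a; b] -> y \in [:: v; a; b].
        move=> x y hxy; apply/idP/idP; first exact: sub.
        by apply: sub; rewrite adj_sym.
      move=> x y hxy; rewrite !inE => /orP[/eqP e|/orP[/eqP e|/eqP e]]; subst;
        move: hxy; rewrite ?adjv ?adja ?adjb => /orP[] /eqP ->; rewrite ?eqxx ?orbT //.
    by move/(closed_connect cl) <-; rewrite inE eqxx.
  apply: n3; apply: (@iso_seq G [:: v; a; b] v) => //.
    by rewrite /= !inE negb_or va vb ab.
  case=> [[|[|[|i]]] Hi] // [[|[|[|j]]] Hj] //=;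
    by rewrite ?adjv ?adja ?adjb ?eqxx ?(neqF ab) ?(neqF va) ?(neqF vb).
have /card_gt0P[c] : 0 < #|[set y | adj a y] :\ v|.
  by have := cardsD1 v [set y | adj a y]; rewrite Hk inE hav; lia.
rewrite !inE => /andP[cv hac].
have /card_gt0P[d] : 0 < #|[set y | adj b y] :\ v|.
  by have := cardsD1 v [set y | adj b y]; rewrite Hk inE hbv; lia.
rewrite !inE => /andP[dv hbd].
have vc : v != c by rewrite eq_sym.
have vd : v != d by rewrite eq_sym.
have adja := nbr2 (Hk a) hav hac vc.
have adjb := nbr2 (Hk b) hbv hbd vd.
have hba : adj b a = false by rewrite adj_sym.
have ac := adj_neq hac; have bd := adj_neq hbd.
have ca : c != a by rewrite eq_sym.
have db : d != b by rewrite eq_sym.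
have cb : c != b by apply/eqP => e; subst; rewrite hac in hab.
have bc : b != c by rewrite eq_sym.
have da : d != a by apply/eqP => e; subst; rewrite hbd in hba.
have ad : a != d by rewrite eq_sym.
have m1 := hmu1 c hac cv cb.
have far : forall e, e != v -> ~~ adj v e -> ~~ adj a e -> ~~ adj b e -> False.
  move=> e ev nve nae nbe.
  have ve : v != e by rewrite eq_sym.
  have := Hmu v e ve nve.
  suff -> : common_nbrs v e = set0 by rewrite cards0 => e0; rewrite -e0 in m1.
  apply/setP => z; rewrite !inE; apply/negP => /andP[].
  rewrite adjv => /orP[] /eqP ->; rewrite adj_sym; by [rewrite (negbTE nae)|rewrite (negbTE nbe)].
have nva : ~~ adj v a = false by rewrite hva.
case: (eqVneq c d) => [e|cd].
  subst d.
  have hca : adj c a by rewrite adj_sym.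
  have hcb : adj c b by rewrite adj_sym.
  have adjc := nbr2 (Hk c) hca hcb ab.
  have allw : forall w, w \in [:: v; a; c; b].
    move=> w; rewrite !inE; apply/negPn/negP; rewrite !negb_or => /and4P[wv wa wc wb].
    apply: (far w wv); rewrite ?adjv ?adja ?adjb negb_or ?wa ?wb ?wv ?wc //.
  apply: n4; apply: (@iso_seq G [:: v; a; c; b] v) => //.
    by rewrite /= !inE !negb_or va vc vb ac ab cb.
  case=> [[|[|[|[|i]]]] Hi] // [[|[|[|[|j]]]] Hj] //=;
    by rewrite ?adjv ?adja ?adjb ?adjc ?eqxx ?(neqF ab) ?(neqF va) ?(neqF vb)
      ?(neqF ac) ?(neqF vc) ?(neqF cb).
have dc : d != c by rewrite eq_sym.
case hcd: (adj c d).
  have hca : adj c a by rewrite adj_sym.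
  have hdc : adj d c by rewrite adj_sym.
  have hdb : adj d b by rewrite adj_sym.
  have adjc := nbr2 (Hk c) hca hcd ad.
  have adjd := nbr2 (Hk d) hdb hdc bc.
  have allw : forall w, w \in [:: v; a; c; d; b].
    move=> w; rewrite !inE; apply/negPn/negP; rewrite !negb_or => /and5P[wv wa wc wd wb].
    apply: (far w wv); rewrite ?adjv ?adja ?adjb negb_or ?wa ?wb ?wv ?wc ?wd //.
  apply: n5; apply: (@iso_seq G [:: v; a; c; d; b] v) => //.
    by rewrite /= !inE !negb_or va vc vd vb ac ad ab cd cb db.
  case=> [[|[|[|[|[|i]]]]] Hi] // [[|[|[|[|[|j]]]]] Hj] //=;
    by rewrite ?adjv ?adja ?adjb ?adjc ?adjd ?eqxx ?(neqF ab) ?(neqF va) ?(neqF vb)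
      ?(neqF ac) ?(neqF vc) ?(neqF cb) ?(neqF vd) ?(neqF ad) ?(neqF cd) ?(neqF db).
have := Hmu c d cd (negbT hcd).
move=> e; rewrite -e in m1; case/card_gt0P: m1 => w; rewrite inE => /andP[hcw hdw].
have wc : w != c by rewrite eq_sym (adj_neq hcw).
have wd : w != d by rewrite eq_sym (adj_neq hdw).
have wv : w != v.
  apply/eqP => e'; subst w; move: hcw; rewrite adj_sym adjv (negbTE ca) (negbTE cb).
  done.
apply: (far w wv); rewrite ?adja ?adjb ?(negbTE wv) ?(negbTE wc) ?(negbTE wd) //.
rewrite adjv negb_or; apply/andP; split; apply/eqP => e'; subst w.
  by move: hdw; rewrite adj_sym adja (negbTE dv) (negbTE dc).
by move: hcw; rewrite adj_sym adjb (negbTE cv) (negbTE cd).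
Qed.

From Stdlib Require Import Classical.

Theorem mainTheorem8 (G : sgraph) :
  connected G ->
  ~ isomorphic G (cycle_graph 3) ->
  ~ isomorphic G (cycle_graph 4) ->
  ~ isomorphic G (cycle_graph 5) ->
  exists m, m <= 2 /\ ~ strongly_regular (iter_line m G).
Proof.
move=> conn n3 n4 n5.
case: (classic (strongly_regular G)) => [[n [k [l [m srg]]]]|nG]; last by exists 0.
have [Hn Hn1 Hk _ _] := srg.
case: k Hk srg => [|[|[|k]]] Hk srg.
- exists 1; split => //; apply: no_edge_line => x y; apply/negP => hxy.
  have : 0 < #|[set y | adj x y]| by apply/card_gt0P; exists y; rewrite inE.
  by rewrite Hk.
- exists 2; split => //; apply: no_edge_line => E F; exact: deg1_line Hk E F.
- by case: (deg2_case conn srg n3 n4 n5).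
- exists 2; split => //.
  have /card_gt0P[x0 _] : 0 < #|vert G| by rewrite Hn.
  exact: (deg3_line x0 Hk).
Qed.
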